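(* For $n\ge1$, $m(W_n)=\frac{(n-1)n(n+1)}{6}$ and $m(M_n)=0$; moreover $\frac{(n-1)n(n+1)}{6}$ equals the number of meet-irreducible elements of $(\mathcal{Q}_n,\le)$.
   Context: $L_n=\{0,\dots,n\}$. For a map $Q:L_n\times L_n\to\mathbb{R}$ write $|Q|=\sum_{i,j=1}^{n}Q(i,j)$. $M_n(i,j)=\min\{i,j\}$ and $W_n(i,j)=\max\{i+j-n,0\}$, and $m(Q)=|M_n|-|Q|$. $\mathcal{Q}_n$ is the set of irreducible discrete quasi-copulas: maps $Q:L_n\times L_n\to L_n$ (onto) with $Q(i,0)=Q(0,i)=0$, $Q(i,n)=Q(n,i)=i$, non-decreasing in each argument, and $Q(i,j)+Q(i',j')\ge Q(i,j')+Q(i',j)$ whenever $i\le i'$, $j\le j'$ and one of $i,i',j,j'$ lies in $\{0,n\}$; ordered by $P\le Q$ iff $P(i,j)\le Q(i,j)$ for all $i,j$. An element $z$ of a finite poset is meet-irreducible if it is not the maximum and $z=x\wedge y$ implies $z=x$ or $z=y$. *)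

(* Defs.v *)
From mathcomp Require Import all_boot all_order all_algebra.
Set Implicit Arguments. Unset Strict Implicit. Unset Printing Implicit Defensive.

(* L_n = {0,...,n} is 'I_n.+1 ; a map L_n x L_n -> L_n is a finite function. *)
Definition qmap (n : nat) := {ffun 'I_n.+1 * 'I_n.+1 -> 'I_n.+1}.

Definition absQ (n : nat) (Q : nat -> nat -> nat) : nat :=
  \sum_(1 <= i < n.+1) \sum_(1 <= j < n.+1) Q i j.

Definition Mn (n : nat) (i j : nat) : nat := minn i j.
Definition Wn (n : nat) (i j : nat) : nat := (i + j) - n. (* = max(i+j-n,0) *)

Definition mQ (n : nat) (Q : nat -> nat -> nat) : int :=
  (absQ n (Mn n))%:Z - (absQ n Q)%:Z.

Definition qfun (n : nat) (Q : qmap n) (i j : 'I_n.+1) : nat := val (Q (i, j)).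

(* irreducible discrete quasi-copulas *)
Definition isQ (n : nat) (Q : qmap n) : bool :=
  [&& [forall k : 'I_n.+1, exists ij : 'I_n.+1 * 'I_n.+1, Q ij == k],
      [forall i : 'I_n.+1, (qfun Q i ord0 == 0) && (qfun Q ord0 i == 0)],
      [forall i : 'I_n.+1, (qfun Q i ord_max == i) && (qfun Q ord_max i == i)],
      [forall i : 'I_n.+1, forall i' : 'I_n.+1, forall j : 'I_n.+1,
         (i <= i') ==> (qfun Q i j <= qfun Q i' j) && (qfun Q j i <= qfun Q j i')] &
      [forall i : 'I_n.+1, forall i' : 'I_n.+1, forall j : 'I_n.+1, forall j' : 'I_n.+1,
         [&& i <= i', j <= j' &
            [|| i == ord0, i == ord_max, i' == ord0, i' == ord_max,
                j == ord0, j == ord_max, j' == ord0 | j' == ord_max]] ==>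
         (qfun Q i j' + qfun Q i' j <= qfun Q i j + qfun Q i' j')]].

Definition leQ (n : nat) (P Q : qmap n) : bool :=
  [forall ij : 'I_n.+1 * 'I_n.+1, P ij <= Q ij].

Definition is_meetQ (n : nat) (x y z : qmap n) : bool :=
  [&& isQ z, leQ z x, leQ z y &
      [forall w : qmap n, (isQ w && leQ w x && leQ w y) ==> leQ w z]].

Definition is_maxQ (n : nat) (z : qmap n) : bool :=
  [forall w : qmap n, isQ w ==> leQ w z].

Definition meet_irrQ (n : nat) (z : qmap n) : bool :=
  [&& isQ z, ~~ is_maxQ z &
      [forall x : qmap n, forall y : qmap n,
         [&& isQ x, isQ y & is_meetQ x y z] ==> (z == x) || (z == y)]].

(* Main.v *)
Require Import Defs.
From mathcomp Require Import all_boot all_order all_algebra.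
From mathcomp Require Import zify.
Set Implicit Arguments. Unset Strict Implicit. Unset Printing Implicit Defensive.

Lemma sum_sub (r : seq nat) (F G : nat -> nat) :
  (forall j, j \in r -> G j <= F j) ->
  \sum_(j <- r) (F j - G j) = \sum_(j <- r) F j - \sum_(j <- r) G j
  /\ \sum_(j <- r) G j <= \sum_(j <- r) F j.
Proof.
elim: r => [|x r IH] H; first by rewrite !big_nil.
rewrite !big_cons.
have [IH1 IH2] := IH (fun j hj => H j (mem_behead (s:=x::r) hj)).
have hx := H x (mem_head _ _).
rewrite IH1; split; lia.
Qed.

Lemma T2 a m : 2 * \sum_(0 <= j < m) (j - a) = (m - a) * (m - a).-1.
Proof.
elim: m => [|m IH]; first by rewrite big_geq.
rewrite big_nat_recr //= mulnDr IH.
case: (leqP a m) => h.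
  have -> : m.+1 - a = (m - a).+1 by lia.
  move: (m - a) => d; case: d => [|d] /=; nia.
have -> : m.+1 - a = 0 by lia.
have -> : m - a = 0 by lia.
by [].
Qed.

Lemma inner n i : i <= n ->
  \sum_(0 <= j < n.+1) (minn i j - (i + j - n)) = i * (n - i).
Proof.
move=> hi.
have E : \sum_(0 <= j < n.+1) (minn i j - (i + j - n)) =
         \sum_(0 <= j < n.+1) (j - ((j - i) + (j - (n - i)))).
  apply: eq_big_nat => j hj; lia.
rewrite E.
have [S1 _] := @sum_sub (index_iota 0 n.+1) (fun j => j) (fun j => (j - i) + (j - (n - i)))
  (fun j hj => ltac:(move: hj; rewrite mem_index_iota; lia)).
rewrite S1 big_split /=.
have h0 := T2 0 n.+1. have h1 := T2 i n.+1. have h2 := T2 (n - i) n.+1.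
have e0 : \sum_(0 <= j < n.+1) (j - 0) = \sum_(0 <= j < n.+1) j.
  by apply: eq_bigr => j _; rewrite subn0.
move: h0 h1 h2 e0.
have -> : n.+1 - (n - i) = i.+1 by lia.
have -> : n.+1 - i = (n - i).+1 by lia.
rewrite subn0 /=.
move: (\sum_(0 <= j < n.+1) (j - 0)) (\sum_(0 <= j < n.+1) (j - i))
  (\sum_(0 <= j < n.+1) (j - (n - i))) (\sum_(0 <= j < n.+1) j).
have -> : n = i + (n - i) by lia.
move: (n - i) => x A B C D hA hB hC hD. nia.
Qed.

Lemma sum_sq m : 6 * \sum_(0 <= i < m) (i * i) = m.-1 * m * (2 * m).-1.
Proof.
elim: m => [|m IH]; first by rewrite big_geq.
rewrite big_nat_recr //= mulnDr IH; case: m {IH} => [|m] /=; nia.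
Qed.

Lemma sum_id m : 2 * \sum_(0 <= i < m) i = m * m.-1.
Proof.
elim: m => [|m IH]; first by rewrite big_geq.
rewrite big_nat_recr //= mulnDr IH; case: m {IH} => [|m] /=; nia.
Qed.

Lemma outer n : 6 * \sum_(0 <= i < n.+1) (i * (n - i)) = n.-1 * n * n.+1.
Proof.
have E : \sum_(0 <= i < n.+1) (i * (n - i)) = \sum_(0 <= i < n.+1) (n * i - i * i).
  apply: eq_big_nat => i hi; rewrite mulnBr mulnC //.
have [S1 _] := @sum_sub (index_iota 0 n.+1) (fun i => n * i) (fun i => i * i)
  (fun i hi => ltac:(move: hi; rewrite mem_index_iota => /andP[_ h];
                     apply: leq_mul => //; by rewrite -ltnS)).
rewrite E S1 -big_distrr /=.
have h1 := sum_id n.+1. have h2 := sum_sq n.+1.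
move: h1 h2 => /=.
move: (\sum_(0 <= i < n.+1) i) (\sum_(0 <= i < n.+1) (i * i)) => A B hA hB.
clear E S1; case: n hA hB => [|n] /= hA hB; first nia.
nia.
Qed.
Section S.
Variable n : nat.

Definition qf (Q : qmap n) (i j : nat) : nat := val (Q (inord i, inord j)).
Definition mk (g : nat -> nat -> nat) : qmap n := [ffun ij : 'I_n.+1 * 'I_n.+1 => inord (g ij.1 ij.2)].

Definition good (g : nat -> nat -> nat) :=
  (forall k, k <= n -> [/\ g k 0 = 0, g 0 k = 0, g k n = k & g n k = k]) /\
  (forall i i' j, i <= i' -> i' <= n -> j <= n ->
     [/\ g i j <= g i' j, g j i <= g j i', g i' j <= g i j + (i' - i)
       & g j i' <= g j i + (i' - i)]).

Lemma good_le g i j : good g -> i <= n -> j <= n -> g i j <= minn i j.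
Proof.
move=> [B M] hi hj.
have [_ _ Bi _] := B i hi. have [_ _ _ Bj] := B j hj.
have [_ h1 _ _] := M j n i hj (leqnn n) hi.
have [h2 _ _ _] := M i n j hi (leqnn n) hj.
lia.
Qed.

Lemma qf_mk g i j : good g -> i <= n -> j <= n -> qf (mk g) i j = g i j.
Proof.
move=> G hi hj; rewrite /qf ffunE /= (inordK (n':=n) (m:=i)) ?ltnS //.
rewrite (inordK (n':=n) (m:=j)) ?ltnS // inordK // ltnS.
by apply: leq_trans (good_le G hi hj) _; apply: leq_trans (geq_minl _ _) hi.
Qed.

Lemma qfE (Q : qmap n) (i j : 'I_n.+1) : qfun Q i j = qf Q i j.
Proof. by rewrite /qf !inord_val. Qed.

Lemma qmap_ext (P Q : qmap n) :
  (forall i j, i <= n -> j <= n -> qf P i j = qf Q i j) -> P = Q.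
Proof.
move=> H; apply/ffunP => -[i j]; apply/val_inj.
by have := H i j (ltn_ord i) (ltn_ord j); rewrite /qf !inord_val.
Qed.

Lemma leQP (P Q : qmap n) :
  reflect (forall i j, i <= n -> j <= n -> qf P i j <= qf Q i j) (leQ P Q).
Proof.
apply: (iffP forallP) => H.
  by move=> i j hi hj; exact: (H (inord i, inord j)).
by move=> -[i j]; have := H i j (ltn_ord i) (ltn_ord j); rewrite /qf !inord_val.
Qed.

Lemma isQ_good (Q : qmap n) : isQ Q -> good (qf Q).
Proof.
rewrite /isQ => /and5P[_ /forallP H0 /forallP Hn /forallP Hm /forallP H2].
have hk : forall k, k <= n -> (inord k : 'I_n.+1) = k :> nat by move=> k hk; rewrite inordK // ltnS.
have Hm3 := fun a b c => elimT forallP (elimT forallP (Hm a) b) c.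
have H24 := fun a b c d => elimT forallP (elimT forallP (elimT forallP (H2 a) b) c) d.
split.
  move=> k hk'.
  have /andP[/eqP a /eqP b] := H0 (inord k).
  have /andP[/eqP c /eqP d] := Hn (inord k).
  move: a b c d; rewrite !qfE /= !hk //.
move=> i i' j hii' hi' hj.
have hi : i <= n by apply: leq_trans hi'.
have := Hm3 (inord i) (inord i') (inord j).
rewrite !qfE !hk // hii' /= => /andP[m1 m2].
have := H24 (inord i) (inord i') (inord j) ord_max.
rewrite !qfE !hk //= hii' hj /= eqxx !orbT /=.
have := H24 (inord j) ord_max (inord i) (inord i').
rewrite !qfE !hk //= hii' hj /= eqxx !orbT /= => l2 l1.
have /andP[_ /eqP e1] := Hn (inord i).
have /andP[_ /eqP e2] := Hn (inord i').
have /andP[e3 _] := Hn (inord j).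
move: e1 e2 e3; rewrite !qfE /= !hk // => e1 e2 /eqP e3.
have /andP[e4 _] := Hn (inord i); move: e4; rewrite !qfE /= !hk // => /eqP e4.
have /andP[_ e5] := Hn (inord j); move: e5; rewrite !qfE /= !hk // => /eqP e5.
have /andP[e6 _] := Hn (inord i'); move: e6; rewrite !qfE /= !hk // => /eqP e6.
split => //; lia.
Qed.

Lemma good_rect g i i' j j' : good g -> i <= i' -> i' <= n -> j <= j' -> j' <= n ->
  [|| i == 0, i == n, i' == 0, i' == n, j == 0, j == n, j' == 0 | j' == n] ->
  g i j' + g i' j <= g i j + g i' j'.
Proof.
move=> [B M] h1 h2 h3 h4 hb.
have hi: i <= n by lia. have hj : j <= n by lia.
have [m1 _ _ _] := M i i' j' h1 h2 h4.
have [_ m2 _ _] := M j j' i' h3 h4 h2.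
have [_ _ l1 _] := M i i' j h1 h2 hj.
have [_ _ _ l2] := M j j' i h3 h4 hi.
have [z1 _ n1 _] := B i hi. have [z2 _ n2 _] := B i' h2.
have [_ z3 _ n3] := B j hj. have [_ z4 _ n4] := B j' h4.
case/orP: hb => [/eqP e|]; first by rewrite e z3 z4; lia.
case/orP => [/eqP e|]; first by have e' : i' = n := ltac:(lia); rewrite e e' n3 n4; lia.
case/orP => [/eqP e|]; first by have e' : i = 0 := ltac:(lia); rewrite e e' z3 z4; lia.
case/orP => [/eqP e|]; first by rewrite e n3 n4; lia.
case/orP => [/eqP e|]; first by rewrite e z1 z2; lia.
case/orP => [/eqP e|]; first by have e' : j' = n := ltac:(lia); rewrite e e' n1 n2; lia.
case/orP => [/eqP e|/eqP e]; first by have e' : j = 0 := ltac:(lia); rewrite e e' z1 z2; lia.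
by rewrite e n1 n2; lia.
Qed.

Lemma good_isQ g : good g -> isQ (mk g).
Proof.
move=> G; have [B M] := G.
have le_n : forall i : 'I_n.+1, i <= n by move=> i; rewrite -ltnS.
apply/and5P; split.
- apply/forallP => k; apply/existsP; exists (k, ord_max); rewrite ffunE.
  apply/eqP/val_inj => /=; have [_ _ -> _] := B k (le_n k); by rewrite inordK.
- apply/forallP => k; rewrite !qfE !qf_mk //= ?le_n //.
  by have [-> -> _ _] := B k (le_n k).
- apply/forallP => k; rewrite !qfE !qf_mk //= ?le_n //.
  have [_ _ e1 e2] := B k (le_n k); by rewrite e1 e2 !eqxx.
- apply/forallP => i; apply/forallP => i'; apply/forallP => j; apply/implyP => hii'.
  rewrite !qfE !qf_mk ?le_n //.
  by have [-> -> _ _] := M i i' j hii' (le_n i') (le_n j).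
- apply/forallP => i; apply/forallP => i'; apply/forallP => j; apply/forallP => j'.
  apply/implyP => /and3P[h1 h3 hb].
  rewrite !qfE !qf_mk ?le_n //; apply: good_rect => //; rewrite ?le_n //.
Qed.

Lemma good_min g h : good g -> good h -> good (fun i j => minn (g i j) (h i j)).
Proof.
move=> [B1 M1] [B2 M2]; split.
  move=> k hk; have [a b c d] := B1 k hk; have [a' b' c' d'] := B2 k hk.
  by rewrite a b c d a' b' c' d' !minnn.
move=> i i' j h1 h2 h3.
have [a b c d] := M1 i i' j h1 h2 h3; have [a' b' c' d'] := M2 i i' j h1 h2 h3.
split; lia.
Qed.

Definition qmin (x y : qmap n) := mk (fun i j => minn (qf x i j) (qf y i j)).

Lemma qmin_good x y : isQ x -> isQ y -> good (fun i j => minn (qf x i j) (qf y i j)).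
Proof. by move=> hx hy; apply: good_min; apply: isQ_good. Qed.

Lemma meet_min x y : isQ x -> isQ y -> is_meetQ x y (qmin x y).
Proof.
move=> hx hy; have G := qmin_good hx hy.
apply/and4P; split.
- exact: good_isQ.
- apply/leQP => i j hi hj; rewrite qf_mk //; exact: geq_minl.
- apply/leQP => i j hi hj; rewrite qf_mk //; exact: geq_minr.
apply/forallP => w; apply/implyP => /andP[/andP[_ /leQP h1] /leQP h2].
apply/leQP => i j hi hj; rewrite qf_mk // leq_min h1 // h2 //.
Qed.

Lemma meet_unique x y z : isQ x -> isQ y -> is_meetQ x y z -> z = qmin x y.
Proof.
move=> hx hy /and4P[hz /leQP zx /leQP zy /forallP H].
have G := qmin_good hx hy.
have /implyP := H (qmin x y).
have /and4P[hm mx my _] := meet_min hx hy.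
rewrite hm mx my => /(_ isT) /leQP h.
apply: qmap_ext => i j hi hj; apply/eqP; rewrite eqn_leq h // qf_mk // leq_min.
by rewrite zx // zy.
Qed.

Definition Uf a b v := fun k l => minn (minn k l) (v + (k - a) + (l - b)).

Lemma good_U a b v : a <= n -> b <= n -> a + b - n <= v -> good (Uf a b v).
Proof.
rewrite /Uf => ha hb hv; split.
  move=> k hk; split; lia.
move=> i i' j h1 h2 h3; split; lia.
Qed.

Lemma good_lb g a b : good g -> a <= n -> b <= n -> a + b - n <= g a b.
Proof.
move=> [B M] ha hb; have [_ _ _ l] := M b n a hb (leqnn n) ha.
have [_ _ e _] := B a ha; lia.
Qed.

Lemma le_U g a b v : good g -> a <= n -> b <= n -> g a b <= v ->
  forall k l, k <= n -> l <= n -> g k l <= Uf a b v k l.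
Proof.
move=> G ha hb hv k l hk hl; have [B M] := G.
have hm := good_le G hk hl.
have hka : maxn k a <= n by rewrite geq_max hk.
have hlb : maxn l b <= n by rewrite geq_max hl.
have [x1 _ _ _] := M k (maxn k a) l (leq_maxl _ _) hka hl.
have [_ x2 _ _] := M l (maxn l b) (maxn k a) (leq_maxl _ _) hlb hka.
have [_ _ x3 _] := M a (maxn k a) (maxn l b) (leq_maxr _ _) hka hlb.
have [_ _ _ x4] := M b (maxn l b) a (leq_maxr _ _) hlb ha.
rewrite /Uf; lia.
Qed.

Lemma U_at a b v : v <= minn a b -> Uf a b v a b = v.
Proof. rewrite /Uf; lia. Qed.

Definition Mx := mk (Uf n n n).
Definition Phi a b v := mk (Uf a b v).

Lemma good_Mx : good (Uf n n n).
Proof. apply: good_U => //; lia. Qed.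
Hint Resolve good_Mx : core.

Lemma is_max_Mx : is_maxQ Mx.
Proof.
apply/forallP => w; apply/implyP => hw; apply/leQP => i j hi hj.
have G := isQ_good hw; rewrite qf_mk ?good_Mx //.
apply: le_U => //; have := good_le G (leqnn n) (leqnn n); lia.
Qed.

Lemma Phi_irr a b v : a <= n -> b <= n -> a + b - n <= v -> v < minn a b ->
  meet_irrQ (Phi a b v).
Proof.
move=> ha hb h1 h2; have G := good_U ha hb h1.
apply/and3P; split.
- exact: good_isQ.
- apply/negP => /forallP /(_ Mx) /implyP /(_ (good_isQ good_Mx)) /leQP /(_ a b ha hb).
  rewrite !qf_mk ?good_Mx // U_at; last lia.
  rewrite /Uf; lia.
apply/forallP => x; apply/forallP => y; apply/implyP => /and3P[hx hy hm].
have e := meet_unique hx hy hm.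
have /and4P[_ /leQP px /leQP py _] := hm.
have := congr1 (fun Q => qf Q a b) e.
rewrite /= /Phi /qmin (qf_mk G) // (qf_mk (qmin_good hx hy)) // U_at; last lia.
move=> ev; apply/orP.
have [hxy|hxy] := leqP (qf x a b) (qf y a b).
  left; apply/eqP; apply: qmap_ext => i j hi hj; apply/eqP; rewrite eqn_leq px //=.
  rewrite /Phi qf_mk //; apply: le_U => //; first exact: isQ_good.
  lia.
right; apply/eqP; apply: qmap_ext => i j hi hj; apply/eqP; rewrite eqn_leq py //=.
rewrite /Phi qf_mk //; apply: le_U => //; first exact: isQ_good.
lia.
Qed.

Lemma Mx_val i j : i <= n -> j <= n -> qf Mx i j = minn i j.
Proof. move=> hi hj; rewrite /Mx qf_mk // /Uf; lia. Qed.

Lemma irr_Phi z : meet_irrQ z -> exists a b, [/\ a <= n, b <= n,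
   a + b - n <= qf z a b, qf z a b < minn a b & z = Phi a b (qf z a b)].
Proof.
case/and3P => hz hnm /forallP Hirr.
have Gz := isQ_good hz.
pose Uz (p : 'I_n.+1 * 'I_n.+1) := Phi p.1 p.2 (qf z p.1 p.2).
have le_n : forall i : 'I_n.+1, i <= n by move=> i; rewrite -ltnS.
have GU : forall p : 'I_n.+1 * 'I_n.+1, good (Uf p.1 p.2 (qf z p.1 p.2)).
  move=> p; apply: good_U; [exact: le_n | exact: le_n | exact: (good_lb Gz (le_n _) (le_n _))].
have QU : forall p, isQ (Uz p) by move=> p; apply: good_isQ.
have zU : forall p, leQ z (Uz p).
  move=> p; apply/leQP => i j hi hj; rewrite /Uz /Phi qf_mk //.
  by apply: le_U; rewrite ?le_n.
have UzA : forall p : 'I_n.+1 * 'I_n.+1, qf (Uz p) p.1 p.2 = qf z p.1 p.2.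
  move=> p; rewrite /Uz /Phi qf_mk ?le_n // U_at //; exact: good_le.
pose A := foldr (fun p acc => qmin (Uz p) acc) Mx.
have C1 : forall s, [/\ isQ (A s), leQ z (A s) &
     forall p : 'I_n.+1 * 'I_n.+1, p \in s -> qf (A s) p.1 p.2 <= qf z p.1 p.2].
  elim => [|p s [IH1 IH2 IH3]] /=.
    split => //; first exact: good_isQ.
    by apply/leQP => i j hi hj; have /forallP/(_ z)/implyP/(_ hz)/leQP := is_max_Mx; apply.
  have G := qmin_good (QU p) IH1.
  split; first exact: good_isQ.
    apply/leQP => i j hi hj; rewrite /qmin qf_mk // leq_min.
    by move/leQP: (zU p) => -> //; move/leQP: IH2 => -> .
  move=> q; rewrite inE => /orP[/eqP ->|hq]; rewrite /qmin qf_mk ?le_n //.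
    by rewrite UzA geq_minl.
  by apply: leq_trans (geq_minr _ _) (IH3 q hq).
have C2 : forall s, (forall p, p \in s -> Uz p != z) -> A s != z.
  elim => [|p s IH] /= H.
    apply/eqP => e; move: hnm; rewrite -e is_max_Mx //.
  apply/eqP => e.
  have [Q1 _ _] := C1 s.
  have hm : is_meetQ (Uz p) (A s) z by rewrite -e; apply: meet_min.
  have := Hirr (Uz p); move/forallP/(_ (A s)); rewrite QU Q1 hm /= => /orP[|] /eqP e'.
    by move: (H p (mem_head _ _)); rewrite e' eqxx.
  move: (IH (fun q hq => H q (@mem_behead _ (p :: s) q hq))); by rewrite e' eqxx.
have [/existsP[p /eqP ep]|hno] := boolP [exists p, Uz p == z]; last first.
  exfalso; pose s := enum [set: 'I_n.+1 * 'I_n.+1].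
  have := C2 s; have [_ h2 h3] := C1 s.
  suff -> : A s = z.
    rewrite eqxx => H; apply: (negP (H _)) => //= q _; apply/negP => /eqP eq; move/negP: hno; apply.
    by apply/existsP; exists q; rewrite eq.
  apply: qmap_ext => i j hi hj; apply/eqP; rewrite eqn_leq (elimT (leQP _ _) h2) // andbT.
  have := h3 (inord i, inord j); rewrite mem_enum inE /= !inordK ?ltnS //; exact.
exists p.1, p.2; rewrite !le_n; split => //.
  by apply: good_lb; rewrite ?le_n.
  rewrite ltn_neqAle (good_le Gz) ?le_n // andbT; apply/eqP => ez.
  move/negP: hnm; apply; apply/forallP => w; apply/implyP => hw.
  have := is_max_Mx; move/forallP/(_ w); rewrite hw /=.
  suff -> : Mx = z by [].
  rewrite -ep; apply: qmap_ext => i j hi hj.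
  rewrite Mx_val // /Uz /Phi qf_mk ?le_n // ez /Uf.
  move: (nat_of_ord p.1) (nat_of_ord p.2) => a b; lia.
Qed.

Lemma count_range a b k :
  \sum_(v < k) (((a <= v) && (v < b)) : nat) = minn k b - minn k a.
Proof.
elim: k => [|k IH]; first by rewrite big_ord0 !min0n.
rewrite big_ord_recr /= IH.
case: (leqP a k) => h1; case: (ltnP k b) => h2 /=; lia.
Qed.

Lemma card_irr : #|[set z : qmap n | meet_irrQ z]| =
  \sum_(i < n.+1) \sum_(j < n.+1) (minn i j - (i + j - n)).
Proof.
pose T := [set t : 'I_n.+1 * 'I_n.+1 * 'I_n.+1 |
             (t.1.1 + t.1.2 - n <= t.2) && (t.2 < minn t.1.1 t.1.2)].
pose F (t : 'I_n.+1 * 'I_n.+1 * 'I_n.+1) := Phi t.1.1 t.1.2 t.2.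
have le_n : forall i : 'I_n.+1, i <= n by move=> i; rewrite -ltnS.
have -> : [set z : qmap n | meet_irrQ z] = F @: T.
  apply/setP => z; rewrite inE; apply/idP/imsetP.
    move=> /irr_Phi [a [b [ha hb h1 h2 ->]]].
    have hv : qf z a b <= n by move: h2; rewrite /minn; case: ifP => _; lia.
    exists ((inord a, inord b), inord (qf z a b)).
      by rewrite inE /= !inordK ?ltnS // h1 h2.
    by rewrite /F /= !inordK ?ltnS.
  move=> [t]; rewrite inE => /andP[h1 h2] ->.
  by apply: Phi_irr => //; rewrite le_n.
rewrite card_in_imset; last first.
  move=> [[a1 b1] v1] [[a2 b2] v2]; rewrite !inE /= => /andP[h1 h2] /andP[h3 h4] e.
  have G1 := good_U (le_n a1) (le_n b1) h1.
  have G2 := good_U (le_n a2) (le_n b2) h3.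
  have e1 := congr1 (fun Q => qf Q a1 b1) e.
  have e2 := congr1 (fun Q => qf Q a2 b2) e.
  move: e1 e2; rewrite /F /Phi /= (qf_mk G1) ?le_n // (qf_mk G2) ?le_n //.
  rewrite (qf_mk G1) ?le_n // (qf_mk G2) ?le_n // !U_at; try lia.
  rewrite /Uf => e1 e2.
  have ea : a1 = a2 :> nat by lia.
  have eb : b1 = b2 :> nat by lia.
  have ev : v1 = v2 :> nat by lia.
  by rewrite (val_inj ea) (val_inj eb) (val_inj ev).
rewrite -sum1_card big_mkcond /=.
have E : forall (G : 'I_n.+1 * 'I_n.+1 * 'I_n.+1 -> nat),
    \sum_t G t = \sum_(i < n.+1) \sum_(j < n.+1) \sum_(v < n.+1) G ((i, j), v).
  move=> G; rewrite pair_bigA /= pair_bigA /=; apply: eq_bigr => -[[i j] v] _ //.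
rewrite E; apply: eq_bigr => i _; apply: eq_bigr => j _.
have hi := le_n i; have hj := le_n j.
rewrite (_ : minn i j - (i + j - n) = minn n.+1 (minn i j) - minn n.+1 (i + j - n)); last by lia.
rewrite -count_range; apply: eq_bigr => v _; rewrite inE /=; by case: ifP.
Qed.
End S.

Theorem mainTheorem12 (n : nat) (hn : 1 <= n) :
  [/\ mQ n (Wn n) = Posz ((n.-1 * n * n.+1) %/ 6),
      mQ n (Mn n) = Posz 0 &
      (n.-1 * n * n.+1) %/ 6 = #|[set z : qmap n | meet_irrQ z]|].
Proof.
pose h i j := minn i j - (i + j - n).
have K0 : \sum_(i < n.+1) \sum_(j < n.+1) h i j =
          \sum_(0 <= i < n.+1) \sum_(0 <= j < n.+1) h i j.
  rewrite -(big_mkord xpredT (fun i => \sum_(j < n.+1) h i j)); apply: eq_bigr => i _.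
  by rewrite -(big_mkord xpredT (fun j => h i j)).
have K1 : \sum_(0 <= i < n.+1) \sum_(0 <= j < n.+1) h i j =
          \sum_(0 <= i < n.+1) (i * (n - i)).
  apply: eq_big_nat => i hi; apply: inner; lia.
have K2 : \sum_(0 <= i < n.+1) \sum_(0 <= j < n.+1) h i j =
          \sum_(1 <= i < n.+1) \sum_(1 <= j < n.+1) h i j.
  rewrite big_ltn // big1_seq ?add0n; last first.
    by move=> j _; rewrite /h min0n sub0n.
  apply: eq_bigr => i _; rewrite big_ltn // /h minn0 sub0n add0n //.
have inn : forall i, i <= n ->
   \sum_(1 <= j < n.+1) h i j = \sum_(1 <= j < n.+1) minn i j - \sum_(1 <= j < n.+1) (i + j - n)
   /\ \sum_(1 <= j < n.+1) (i + j - n) <= \sum_(1 <= j < n.+1) minn i j.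
  move=> i hi; apply: sum_sub => j; rewrite mem_index_iota; lia.
have [O1 O2] := @sum_sub (index_iota 1 n.+1)
  (fun i => \sum_(1 <= j < n.+1) minn i j) (fun i => \sum_(1 <= j < n.+1) (i + j - n))
  (fun i hi => ltac:(move: hi; rewrite mem_index_iota => /andP[_ hi];
                     by have [_ ->] := inn i ltac:(lia))).
have K3 : \sum_(1 <= i < n.+1) \sum_(1 <= j < n.+1) h i j =
   absQ n (Mn n) - absQ n (Wn n).
  rewrite /absQ /Mn /Wn -O1; apply: eq_big_nat => i hi.
  by have [-> _] := inn i ltac:(lia).
have D : (n.-1 * n * n.+1) %/ 6 = \sum_(i < n.+1) \sum_(j < n.+1) h i j.
  by rewrite K0 K1 -outer mulKn.
split.
- rewrite D K0 K2 K3 /mQ subzn //.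
- by rewrite /mQ GRing.subrr.
- by rewrite D card_irr.
Qed.
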